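(* For every instance of PKP, every optimal solution set $S^*$ satisfies $\sum_{j\in S^*}\log(|p_j|)\ge \log(p_{\max})$, where $p_{\max}=\max_{j\in N}|p_j|$ and $\log$ is the base-2 logarithm.
   Context: The Product Knapsack Problem (PKP): items $j\in N=\{1,\dots,n\}$ with integer weights $w_j$ and integer profits $p_j$, and a positive integer capacity $C$; find $S\subseteq N$ with $\sum_{j\in S}w_j\le C$ maximizing $\prod_{j\in S}p_j$ (the empty set has value $0$). Instances are assumed to satisfy: (a) $w_j\le C$ for all $j$; (b) $p_j\ne 0$ for all $j$; (c) for each $j$ with $p_j<0$ there is $j'\ne j$ with $p_{j'}<0$ and $w_j+w_{j'}\le C$; (d) $w_j\ge 0$ for all $j$; (e) $p_j<0$ whenever $w_j=0$. *)

(* Defs.v *)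
From mathcomp Require Import all_boot all_order all_algebra.
From mathcomp Require Import all_classical all_reals all_analysis.
Set Implicit Arguments. Unset Strict Implicit. Unset Printing Implicit Defensive.
Import Order.TTheory GRing.Theory Num.Theory.
Local Open Scope ring_scope.

Definition log2 {R : realType} (x : R) : R := ln x / ln 2.

Section PKP.
Variable n : nat.
Variables (w p : 'I_n -> int) (C : int).

Definition pkp_weight (S : {set 'I_n}) : int := \sum_(j in S) w j.

Definition pkp_feasible (S : {set 'I_n}) : bool := pkp_weight S <= C.

Definition pkp_value (S : {set 'I_n}) : int :=
  if S == finset.set0 then 0 else \prod_(j in S) p j.

Definition pkp_optimal (S : {set 'I_n}) : Prop :=
  pkp_feasible S /\ forall T : {set 'I_n}, pkp_feasible T -> pkp_value T <= pkp_value S.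

(* the standing instance assumptions (a)-(e), together with 0 < C *)
Definition pkp_instance : Prop :=
  0 < C /\
  [/\ (forall j, w j <= C),
      (forall j, p j != 0),
      (forall j, p j < 0 -> exists2 j', j' != j & (p j' < 0) && (w j + w j' <= C)),
      (forall j, 0 <= w j)
    & (forall j, w j = 0 -> p j < 0)].

Definition pkp_pmax : nat := \max_(j < n) `|p j|%N.
End PKP.

(* Main.v *)
Require Import Defs.
From mathcomp Require Import all_boot all_order all_algebra.
From mathcomp Require Import all_classical all_reals all_analysis.
From mathcomp Require Import zify.
Import Order.TTheory GRing.Theory Num.Theory.
Local Open Scope ring_scope.

Lemma int_bound (n : nat) (w p : 'I_n -> int) (C : int)
    (Hn : (0 < n)%N) (Hinst : pkp_instance w p C)
    (S : {set 'I_n}) (Hopt : pkp_optimal w p C S) :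
  S != finset.set0 /\ ((pkp_pmax p)%:Z <= \prod_(j in S) p j).
Proof.
case: Hinst => C0 [Hw Hp Hneg Hw0 Hz].
case: Hopt => FS Hopt.
have [jm Hjm] : {i0 : 'I_n | pkp_pmax p = `|p i0|%N}.
  apply: bigop.eq_bigmax; by rewrite card_ord.
have key : (pkp_pmax p)%:Z <= pkp_value p S.
  rewrite Hjm.
  have [pos|neg] := ltrP 0 (p jm).
  - have F1 : pkp_feasible w C [set jm].
      by rewrite /pkp_feasible /pkp_weight big_set1.
    apply: le_trans (Hopt _ F1).
    have ne1 : [set jm] != finset.set0.
      by apply/finset.set0Pn; exists jm; rewrite !inE.
    rewrite /pkp_value (negbTE ne1) big_set1.
    by rewrite abszE gtr0_norm.
  - have pn : p jm < 0 by rewrite lt_neqAle neg andbT; exact: Hp.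
    have [j' nj /andP [pj' wj]] := Hneg jm pn.
    have F2 : pkp_feasible w C [set jm; j'].
      by rewrite /pkp_feasible /pkp_weight big_setU1 ?inE 1?eq_sym //= big_set1.
    apply: le_trans (Hopt _ F2).
    have ne : [set jm; j'] != finset.set0.
      by apply/finset.set0Pn; exists jm; rewrite !inE eqxx.
    rewrite /pkp_value (negbTE ne) big_setU1 ?inE 1?eq_sym //= big_set1.
    rewrite abszE ltr0_norm // -mulrN1 ler_nM2l //.
have SN : S != finset.set0.
  apply/negP => /eqP S0; move: key; rewrite /pkp_value S0 eqxx Hjm.
  rewrite lez_nat leqn0 absz_eq0; apply/negP; exact: Hp.
split => //.
by move: key; rewrite /pkp_value (negbTE SN).
Qed.

Theorem lemma3 (R : realType) (n : nat) (w p : 'I_n -> int) (C : int)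
    (Hn : (0 < n)%N) (Hinst : pkp_instance w p C)
    (S : {set 'I_n}) (Hopt : pkp_optimal w p C S) :
  \sum_(j in S) log2 ((`|p j|%N)%:R : R) >= log2 ((pkp_pmax p)%:R : R).
Proof.
have [SN key] := @int_bound n w p C Hn Hinst S Hopt.
have Hp : forall j, p j != 0 by case: Hinst => _ [].
have pos : forall j, (0 : R) < (`|p j|%N)%:R.
  by move=> j; rewrite ltr0n absz_gt0.
have sumln : forall (A : {set 'I_n}),
    \sum_(j in A) ln ((`|p j|%N)%:R : R) = ln (\prod_(j in A) ((`|p j|%N)%:R : R))
    /\ 0 < \prod_(j in A) ((`|p j|%N)%:R : R).
  move=> A; elim/big_rec2: _ => [|j x y _ [-> yp]].
    by rewrite ln1.
  split; last by rewrite mulr_gt0.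
  by rewrite lnM // posrE.
have [E P0] := sumln S.
rewrite /log2 -mulr_suml E ler_wpM2r //.
  by rewrite invr_ge0 ltW // ln_gt0 // ltr1n.
have ge : ((pkp_pmax p)%:R : R) <= \prod_(j in S) ((`|p j|%N)%:R : R).
  have : ((pkp_pmax p)%:Z)%:~R <= (\prod_(j in S) p j)%:~R :> R by rewrite ler_int.
  move/le_trans; apply.
  rewrite rmorph_prod /=.
  apply: le_trans (ler_norm _) _.
  rewrite normr_prod le_eqVlt; apply/orP; left; apply/eqP.
  by apply: eq_bigr => j _; rewrite -intr_norm -natr_absz.
have pm : (0 : R) < (pkp_pmax p)%:R.
  case: (bigop.eq_bigmax (fun j : 'I_n => `|p j|%N)); first by rewrite card_ord.
  move=> j0 Hj; rewrite /pkp_pmax Hj; exact: pos.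
by rewrite ler_ln ?posrE.
Qed.
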